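(* Let $G$ be split with root system of type $F_4$, simple roots $\alpha_1,\alpha_2,\alpha_3,\alpha_4$ in Bourbaki labelling ($\alpha_1,\alpha_2$ long, $\alpha_3,\alpha_4$ short), and let $\widetilde G$ be any $n$-fold Brylinski--Deligne cover associated with a Weyl-invariant quadratic form $Q$. If $n_{\alpha_1}=2n_{\alpha_4}$, then $$f_X(\Phi^\vee_+)=f_Y(\Phi_+)=\frac{1}{n_{\alpha_4}}[1,8]\cup\frac{1}{2n_{\alpha_4}}\{1,3,5,7,9,11\}.$$ If $n_\alpha$ is constant on $\alpha\in\Delta$, then $f_X(\Phi^\vee_+)=f_Y(\Phi_+)=\frac{1}{n_\alpha}[1,11]$.
   Context: $[a,b]$ denotes $\{a,\dots,b\}$. Notation: $\omega_\alpha$ fundamental weights, $\omega^\vee_\alpha$ fundamental coweights, $\rho^\vee=\sum_{\alpha\in\Delta}\omega_\alpha^\vee$. $B_Q(y,z)=Q(y+z)-Q(y)-Q(z)$, $Y_{Q,n}=\{y\in Y:B_Q(y,z)\in n\mathbf Z\ \forall z\in Y\}$, $n_\alpha=n/\gcd(n,Q(\alpha^\vee))$, and $\tilde n_\alpha$ ($\alpha\in\Phi$) defined by $\mathbf Z\alpha^\vee\cap Y_{Q,n}=\mathbf Z\tilde n_\alpha\alpha^\vee$ (for type $F_4$ one has $\tilde n_\alpha=n_\alpha$). $f_X:\Phi_+^\vee\to\mathbf Q$, $f_X(\beta^\vee)=\sum_{\alpha\in\Delta}\langle\omega_\alpha/\tilde n_\alpha,\beta^\vee\rangle$; $f_Y:\Phi_+\to\mathbf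 Q$, $f_Y(\beta)=\langle\rho^\vee,\beta\rangle/\tilde n_\beta$. *)

(* Defs.v *)
From mathcomp Require Import all_boot all_order all_algebra.
From Stdlib Require Import ClassicalEpsilon.
Set Implicit Arguments. Unset Strict Implicit. Unset Printing Implicit Defensive.
Import Order.TTheory GRing.Theory Num.Theory.
Local Open Scope ring_scope.

(* For F4 (simply connected = adjoint) the cocharacter lattice Y is the coroot
   lattice; we use coordinates w.r.t. the simple coroots a_1^v,...,a_4^v.
   Roots are written in coordinates w.r.t. the simple roots a_1,...,a_4;
   the character lattice X has the fundamental weights w_i as basis (dual). *)
Definition vec := 'I_4 -> int.

Definition vec_of (s : seq int) : vec := fun i => nth 0 s i.

(* twice the Gram matrix (a_i,a_j) with long roots of squared length 2:
   a1,a2 long, a3,a4 short, double bond between a2 and a3 *)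
Definition gram2 (i j : 'I_4) : int :=
  nth 0 (nth [::] [:: [:: 4; -2; 0; 0]; [:: -2; 4; -2; 0];
                      [:: 0; -2; 2; -1]; [:: 0; 0; -1; 2]] i) j.

(* 2 (b,b) for b written in simple-root coordinates: 4 if long, 2 if short *)
Definition nrm2 (b : vec) : int := \sum_(i < 4) \sum_(j < 4) b i * b j * gram2 i j.

(* Cartan pairing <a_j, a_i^v> = 2 (a_i,a_j)/(a_i,a_i) *)
Definition cartan (i j : 'I_4) : int := divz (2 * gram2 i j) (gram2 i i).

Definition pair_root (j : 'I_4) (y : vec) : int := \sum_(i < 4) y i * cartan i j.

Definition srefl (j : 'I_4) (y : vec) : vec :=
  fun i => y i - (if i == j then pair_root j y else 0).

(* the coroot b^v = 2 b/(b,b), in simple-coroot coordinates: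
   coefficient i is b_i (a_i,a_i)/(b,b) = b_i * gram2 i i / nrm2 b *)
Definition coroot (b : vec) : vec := fun i => divz (b i * gram2 i i) (nrm2 b).

Definition simple (i : 'I_4) : vec := fun k => (k == i)%:R.

Definition pos_roots : seq vec := map vec_of
  [:: [:: 1;0;0;0]; [:: 0;1;0;0]; [:: 0;0;1;0]; [:: 0;0;0;1];
      [:: 1;1;0;0]; [:: 0;1;1;0]; [:: 0;0;1;1];
      [:: 1;1;1;0]; [:: 0;1;2;0]; [:: 0;1;1;1];
      [:: 1;1;2;0]; [:: 1;1;1;1]; [:: 0;1;2;1];
      [:: 1;2;2;0]; [:: 1;1;2;1]; [:: 0;1;2;2];
      [:: 1;2;2;1]; [:: 1;1;2;2];
      [:: 1;2;3;1]; [:: 1;2;2;2];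
      [:: 1;2;3;2];
      [:: 1;2;4;2];
      [:: 1;3;4;2];
      [:: 2;3;4;2]].

Definition is_quadratic_form (Q : vec -> int) : Prop :=
  exists a : 'I_4 -> 'I_4 -> int,
    forall y, Q y = \sum_(i < 4) \sum_(j < 4 | (i <= j)%N) a i j * y i * y j.

(* Weyl invariance (W is generated by the simple reflections) *)
Definition weyl_invariant (Q : vec -> int) : Prop :=
  forall (j : 'I_4) (y : vec), Q (srefl j y) = Q y.

Definition BQ (Q : vec -> int) (y z : vec) : int := Q (fun i => y i + z i) - Q y - Q z.

Definition inYQn (Q : vec -> int) (n : nat) (y : vec) : Prop :=
  forall z : vec, (n%:Z %| BQ Q y z)%Z.

Definition n_root (Q : vec -> int) (n : nat) (b : vec) : nat :=
  (n %/ gcdn n `|Q (coroot b)|)%N.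

Definition decb (P : Prop) : bool :=
  if excluded_middle_informative P then true else false.

Definition tn_pred (Q : vec -> int) (n : nat) (b : vec) : pred nat :=
  fun k => decb ((0 < k)%N /\ inYQn Q n (fun i => k%:Z * coroot b i)).

(* \tilde n_b : the positive generator of Z b^v \cap Y_{Q,n}, i.e. the least
   k > 0 with k b^v in Y_{Q,n} (0 if there is none, which does not happen) *)
Definition tilde_n (Q : vec -> int) (n : nat) (b : vec) : nat :=
  match excluded_middle_informative (exists k, tn_pred Q n b k) with
  | left H => ex_minn H
  | right _ => 0%N
  end.

(* f_X(b^v) = sum_i <w_i / tilde n_{a_i}, b^v> *)
Definition fX (Q : vec -> int) (n : nat) (b : vec) : rat :=
  \sum_(i < 4) (coroot b i)%:~R / (tilde_n Q n (simple i))%:R.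

(* f_Y(b) = <rho^v, b> / tilde n_b ; <rho^v, b> is the height of b *)
Definition fY (Q : vec -> int) (n : nat) (b : vec) : rat :=
  (\sum_(i < 4) b i)%:~R / (tilde_n Q n b)%:R.

Definition target_mixed (m : nat) : seq rat :=
  [seq k%:R / m%:R | k <- iota 1 8] ++
  [seq (2 * k + 1)%:R / (2 * m)%:R | k <- iota 0 6].

Definition target_const (m : nat) : seq rat := [seq k%:R / m%:R | k <- iota 1 11].

(* Main.v *)
Require Import Defs.
From mathcomp Require Import all_boot all_order all_algebra.
From mathcomp Require Import zify ring lra.
From Stdlib Require Import ClassicalEpsilon.
Import Order.TTheory GRing.Theory Num.Theory.
Local Open Scope ring_scope.
Definition o0 : 'I_4 := @Ordinal 4 0 erefl.
Definition o1 : 'I_4 := @Ordinal 4 1 erefl.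
Definition o2 : 'I_4 := @Ordinal 4 2 erefl.
Definition o3 : 'I_4 := @Ordinal 4 3 erefl.

Lemma sum4 (R : nmodType) (F : 'I_4 -> R) : \sum_(i<4) F i = F o0 + F o1 + F o2 + F o3.
Proof.
rewrite !big_ord_recr big_ord0 /= add0r.
by congr (_+_+_+_); congr F; apply/val_inj.
Qed.

Lemma QE (a : 'I_4 -> 'I_4 -> int) (y : vec) :
  \sum_(i < 4) \sum_(j < 4 | (i <= j)%N) a i j * y i * y j =
  a o0 o0 * y o0 * y o0 + a o0 o1 * y o0 * y o1 + a o0 o2 * y o0 * y o2 + a o0 o3 * y o0 * y o3
  + a o1 o1 * y o1 * y o1 + a o1 o2 * y o1 * y o2 + a o1 o3 * y o1 * y o3
  + a o2 o2 * y o2 * y o2 + a o2 o3 * y o2 * y o3 + a o3 o3 * y o3 * y o3.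
Proof.
rewrite sum4 !(big_mkcond (fun j : 'I_4 => (_ <= j)%N)) !sum4 /=.
ring.
Qed.

Definition Q0 (y : vec) : int :=
  y o0 * y o0 + y o1 * y o1 + 2 * y o2 * y o2 + 2 * y o3 * y o3
  - y o0 * y o1 - 2 * y o1 * y o2 - 2 * y o2 * y o3.

Lemma Qform (Q : vec -> int) : is_quadratic_form Q -> weyl_invariant Q ->
  forall y, Q y = Q (vec_of [:: 1]) * Q0 y.
Proof.
move=> [a hQ] hW.
have Qext : forall v w : vec, (forall p, v p = w p) -> Q v = Q w.
  move=> v w H; rewrite !hQ; apply: eq_bigr => i _; apply: eq_bigr => j _; by rewrite !H.
have SR : forall j s, srefl j (vec_of s) =1 vec_of [seq srefl j (vec_of s) i | i <- [:: o0; o1; o2; o3]].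
  move=> j s [[|[|[|[|p]]]] Hp] //.
have W : forall j s, Q (vec_of s) = Q (vec_of [seq srefl j (vec_of s) i | i <- [:: o0; o1; o2; o3]]).
  by move=> j s; rewrite -(hW j); apply: Qext => p; rewrite SR.
have WW : forall j s t, [seq srefl j (vec_of s) i | i <- [:: o0; o1; o2; o3]] = t ->
    Q (vec_of s) = Q (vec_of t).
  by move=> j s t <-; apply: W.
have W1 : Q (vec_of [:: 1; 0; 0; 0]) = Q (vec_of [:: 1; 1; 0; 0]) by apply: (WW o1); rewrite /srefl /pair_root sum4; vm_compute.
have W2 : Q (vec_of [:: 0; 1; 0; 0]) = Q (vec_of [:: 1; 1; 0; 0]) by apply: (WW o0); rewrite /srefl /pair_root sum4; vm_compute.
have W3 : Q (vec_of [:: 0; 1; 0; 0]) = Q (vec_of [:: 0; 1; 1; 0]) by apply: (WW o2); rewrite /srefl /pair_root sum4; vm_compute.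
have W4 : Q (vec_of [:: 0; 0; 1; 0]) = Q (vec_of [:: 0; 2; 1; 0]) by apply: (WW o1); rewrite /srefl /pair_root sum4; vm_compute.
have W5 : Q (vec_of [:: 0; 0; 1; 0]) = Q (vec_of [:: 0; 0; 1; 1]) by apply: (WW o3); rewrite /srefl /pair_root sum4; vm_compute.
have W6 : Q (vec_of [:: 0; 0; 0; 1]) = Q (vec_of [:: 0; 0; 1; 1]) by apply: (WW o2); rewrite /srefl /pair_root sum4; vm_compute.
have W7 : Q (vec_of [:: 1; 0; 1; 0]) = Q (vec_of [:: -1; 0; 1; 0]) by apply: (WW o0); rewrite /srefl /pair_root sum4; vm_compute.
have W8 : Q (vec_of [:: 1; 0; 0; 1]) = Q (vec_of [:: -1; 0; 0; 1]) by apply: (WW o0); rewrite /srefl /pair_root sum4; vm_compute.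
have W9 : Q (vec_of [:: 0; 1; 0; 1]) = Q (vec_of [:: 0; -1; 0; 1]) by apply: (WW o1); rewrite /srefl /pair_root sum4; vm_compute.
rewrite !hQ !QE /vec_of /= in W1 W2 W3 W4 W5 W6 W7 W8 W9.
have e11 : a o1 o1 = a o0 o0 by lia.
have e01 : a o0 o1 = - a o0 o0 by lia.
have e22 : a o2 o2 = 2 * a o0 o0 by lia.
have e12 : a o1 o2 = - 2 * a o0 o0 by lia.
have e33 : a o3 o3 = 2 * a o0 o0 by lia.
have e23 : a o2 o3 = - 2 * a o0 o0 by lia.
have e02 : a o0 o2 = 0 by lia.
have e03 : a o0 o3 = 0 by lia.
have e13 : a o1 o3 = 0 by lia.
move=> y; rewrite !hQ !QE /Q0 /vec_of /= e11 e01 e22 e12 e33 e23 e02 e03 e13.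
ring.
Qed.


Lemma dvd_mul_gcd (n c m : nat) : (0 < n)%N -> (n %| m * c)%N = (n %/ gcdn n c %| m)%N.
Proof.
move=> n0; set g := gcdn n c.
have g0 : (0 < g)%N by rewrite gcdn_gt0 n0.
have en : n = (n %/ g * g)%N by rewrite divnK // dvdn_gcdl.
have ec : c = (c %/ g * g)%N by rewrite divnK // dvdn_gcdr.
have co : coprime (n %/ g) (c %/ g).
  have H : (gcdn (n %/ g) (c %/ g) * g)%N = g.
    by rewrite muln_gcdl -en -ec.
  by rewrite /coprime -(eqn_pmul2r g0) mul1n H.
by rewrite {1}en {1}ec mulnA dvdn_pmul2r // Gauss_dvdl.
Qed.

Definition decb_true (P : Prop) : decb P = true <-> P.
Proof. by rewrite /decb; case: excluded_middle_informative. Qed.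

Definition wv (v : vec) : seq int :=
  [:: 2 * v o0 - v o1; - v o0 + 2 * v o1 - 2 * v o2;
      - 2 * v o1 + 4 * v o2 - 2 * v o3; - 2 * v o2 + 4 * v o3].

Definition B0 (y z : vec) : int :=
  z o0 * (2 * y o0 - y o1) + z o1 * (- y o0 + 2 * y o1 - 2 * y o2)
  + z o2 * (- 2 * y o1 + 4 * y o2 - 2 * y o3) + z o3 * (- 2 * y o2 + 4 * y o3).

Definition checkv (v : vec) : bool :=
  all (fun x => (Q0 v %| x)%Z) (wv v) && has (fun x => (x == Q0 v) || (x == - Q0 v)) (wv v).

Lemma Bid (y z : vec) : Q0 (fun i => y i + z i) - Q0 y - Q0 z = B0 y z.
Proof. rewrite /Q0 /B0 /=; ring. Qed.

Lemma B0lin (m : int) (v z : vec) : B0 (fun i => m * v i) z = m * B0 v z.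
Proof. rewrite /B0 /=; ring. Qed.

Section Main.
Variables (Q : vec -> int) (n : nat).
Hypothesis (n0 : (0 < n)%N) (hQ : is_quadratic_form Q) (hW : weyl_invariant Q).
Let k := Q (vec_of [:: 1]).

Lemma BQE y z : BQ Q y z = k * B0 y z.
Proof. by rewrite /BQ (Qform _ hQ hW (fun i => _)) (Qform _ hQ hW y) (Qform _ hQ hW z) -Bid /k; ring. Qed.

Lemma inY_iff (v : vec) (m : nat) : checkv v ->
  inYQn Q n (fun i => m%:Z * v i) <-> (n %| m * `|(k * Q0 v)%R|)%N.
Proof.
move=> /andP [hall hhas].
have -> : (n %| m * `|(k * Q0 v)%R|)%N = (n%:Z %| k * (m%:Z * Q0 v))%Z.
  by rewrite dvdzE !abszM /= mulnCA.
split.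
- move=> H; case/hasP: hhas => x xin /orP [] /eqP xq.
  + have [z zE] : exists z, B0 v z = x.
      move: xin; rewrite !inE => /or4P [] /eqP ->.
      * by exists (vec_of [:: 1]); rewrite /B0 /vec_of /=; ring.
      * by exists (vec_of [:: 0; 1]); rewrite /B0 /vec_of /=; ring.
      * by exists (vec_of [:: 0; 0; 1]); rewrite /B0 /vec_of /=; ring.
      * by exists (vec_of [:: 0; 0; 0; 1]); rewrite /B0 /vec_of /=; ring.
    by move: (H z); rewrite BQE B0lin zE xq.
  + have [z zE] : exists z, B0 v z = x.
      move: xin; rewrite !inE => /or4P [] /eqP ->.
      * by exists (vec_of [:: 1]); rewrite /B0 /vec_of /=; ring.
      * by exists (vec_of [:: 0; 1]); rewrite /B0 /vec_of /=; ring.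
      * by exists (vec_of [:: 0; 0; 1]); rewrite /B0 /vec_of /=; ring.
      * by exists (vec_of [:: 0; 0; 0; 1]); rewrite /B0 /vec_of /=; ring.
    by move: (H z); rewrite BQE B0lin zE xq mulrN mulrN rpredN.
- move=> H z; rewrite BQE B0lin.
  have : (Q0 v %| B0 v z)%Z.
    move: hall; rewrite /= andbT => /and4P [h0 h1 h2 h3].
    rewrite /B0.
    by rewrite !rpredD ?dvdz_mull.
  case/dvdzP => t ->.
  have -> : k * (m%:Z * (t * Q0 v)) = t * (k * (m%:Z * Q0 v)) by ring.
  exact: dvdz_mull.
Qed.
End Main.

Definition decb_eq (P : Prop) (b : bool) : (P <-> b) -> decb P = b.
Proof.
move=> [h1 h2]; rewrite /decb; case: excluded_middle_informative => p; case: b h1 h2 => //= h1 h2.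
  by have := h1 p.
by case: p; apply: h2.
Qed.

Definition row' (b : vec) (i : 'I_4) : int :=
  b i * b o0 * gram2 i o0 + b i * b o1 * gram2 i o1 + b i * b o2 * gram2 i o2 + b i * b o3 * gram2 i o3.
Definition nrm2' (b : vec) : int := row' b o0 + row' b o1 + row' b o2 + row' b o3.
Definition coroot' (b : vec) (i : 'I_4) : int := divz (b i * gram2 i i) (nrm2' b).

Lemma corootE b i : coroot b i = coroot' b i.
Proof. by rewrite /coroot /coroot' /nrm2 sum4 !sum4. Qed.

Lemma Q0cor b : Q0 (coroot b) = Q0 (coroot' b).
Proof. by rewrite /Q0 !corootE. Qed.

Lemma checkcor b : checkv (coroot b) = checkv (coroot' b).
Proof. by rewrite /checkv /wv /Q0 !corootE. Qed.


Section Main2.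
Variables (Q : vec -> int) (n : nat).
Hypothesis (n0 : (0 < n)%N) (hQ : is_quadratic_form Q) (hW : weyl_invariant Q).
Let k := Q (vec_of [:: 1]).

Lemma Npos (c : nat) : (0 < n %/ gcdn n c)%N.
Proof. by rewrite divn_gt0 ?gcdn_gt0 ?n0 // dvdn_leq // dvdn_gcdl. Qed.

Lemma tilde_eq (b : vec) : checkv (coroot b) ->
  tilde_n Q n b = (n %/ gcdn n `|(k * Q0 (coroot b))%R|)%N.
Proof.
move=> hc.
set N := (n %/ gcdn n _)%N.
have PN : forall m, tn_pred Q n b m = (0 < m)%N && (N %| m)%N.
  move=> m; rewrite /tn_pred; apply: decb_eq.
  rewrite (inY_iff Q n hQ hW _ m hc) dvd_mul_gcd //.
  by split => [[-> ->]|/andP[-> ->]].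
have N0 : (0 < N)%N by apply: Npos.
rewrite /tilde_n; case: excluded_middle_informative => [H|H]; last first.
  by exfalso; apply: H; exists N; rewrite PN N0 dvdnn.
case: ex_minnP => m Pm minm.
apply/eqP; rewrite eqn_leq; apply/andP; split.
  by apply: minm; rewrite PN N0 dvdnn.
by move: Pm; rewrite PN => /andP [m0 dm]; apply: dvdn_leq.
Qed.

Lemma nroot_eq (b : vec) : n_root Q n b = (n %/ gcdn n `|(k * Q0 (coroot b))%R|)%N.
Proof. by rewrite /n_root (Qform _ hQ hW (coroot b)). Qed.

End Main2.

Lemma inord_o (i : nat) (H : (i < 4)%N) : inord i = Ordinal H.
Proof. by apply/val_inj; rewrite /= inordK. Qed.

Definition Lr : seq (seq int) := 
  [:: [:: 1;0;0;0]; [:: 0;1;0;0]; [:: 0;0;1;0]; [:: 0;0;0;1];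
      [:: 1;1;0;0]; [:: 0;1;1;0]; [:: 0;0;1;1];
      [:: 1;1;1;0]; [:: 0;1;2;0]; [:: 0;1;1;1];
      [:: 1;1;2;0]; [:: 1;1;1;1]; [:: 0;1;2;1];
      [:: 1;2;2;0]; [:: 1;1;2;1]; [:: 0;1;2;2];
      [:: 1;2;2;1]; [:: 1;1;2;2];
      [:: 1;2;3;1]; [:: 1;2;2;2];
      [:: 1;2;3;2];
      [:: 1;2;4;2];
      [:: 1;3;4;2];
      [:: 2;3;4;2]].
Lemma prE : pos_roots = map vec_of Lr. Proof. reflexivity. Qed.

Lemma test2 : all (fun b => checkv (coroot' b) && ((Q0 (coroot' b) == 1) || (Q0 (coroot' b) == 2))) pos_roots.
Proof. by vm_compute. Qed.
Lemma test3 : all (fun s => checkv (coroot' (vec_of s)) && ((Q0 (coroot' (vec_of s)) == 1) || (Q0 (coroot' (vec_of s)) == 2))) Lr.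
Proof. by vm_compute. Qed.

Definition rX (b : vec) : int := coroot' b o0 + coroot' b o1 + 2 * coroot' b o2 + 2 * coroot' b o3.
Definition hX (b : vec) : int := coroot' b o0 + coroot' b o1 + coroot' b o2 + coroot' b o3.
Definition ht (b : vec) : int := b o0 + b o1 + b o2 + b o3.
Definition rY (b : vec) : int := ht b * (if Q0 (coroot' b) == 1 then 1 else 2).

Definition LTm : seq int := [seq (2 * j)%N%:Z | j <- iota 1 8] ++ [seq (2 * j + 1)%N%:Z | j <- iota 0 6].
Definition LTc : seq int := [seq j%:Z | j <- iota 1 11].

Lemma seq_eqi (s1 s2 : seq int) : all (mem s2) s1 -> all (mem s1) s2 -> s1 =i s2.
Proof. by move=> h1 h2 x; apply/idP/idP => [/(allP h1)|/(allP h2)]. Qed.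

Lemma mem_map_eqi (f : int -> rat) (s1 s2 : seq int) : s1 =i s2 -> map f s1 =i map f s2.
Proof.
move=> e x; apply/mapP/mapP => [[y yin ->]|[y yin ->]]; exists y => //.
  by rewrite -e. by rewrite e.
Qed.

Lemma cX1 : map rX pos_roots =i LTm. Proof. by apply: seq_eqi; vm_compute. Qed.
Lemma cY1 : map rY pos_roots =i LTm. Proof. by apply: seq_eqi; vm_compute. Qed.
Lemma cX2 : map hX pos_roots =i LTc. Proof. by apply: seq_eqi; vm_compute. Qed.
Lemma cY2 : map ht pos_roots =i LTc. Proof. by apply: seq_eqi; vm_compute. Qed.

Theorem lemma3p5 (Q : vec -> int) (n : nat) :
  (0 < n)%N -> is_quadratic_form Q -> weyl_invariant Q ->
  let na (i : nat) := n_root Q n (simple (inord i : 'I_4)) in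
  (na 0%N = (2 * na 3)%N ->
     [seq fX Q n b | b <- pos_roots] =i target_mixed (na 3%N) /\
     [seq fY Q n b | b <- pos_roots] =i target_mixed (na 3%N)) /\
  ((forall i j : nat, (i < 4)%N -> (j < 4)%N -> na i = na j) ->
     [seq fX Q n b | b <- pos_roots] =i target_const (na 0%N) /\
     [seq fY Q n b | b <- pos_roots] =i target_const (na 0%N)).
Proof.
move=> n0 hQ hW na.
pose K := Q (vec_of [:: 1]).
pose N (q : int) := (n %/ gcdn n `|(K * q)%R|)%N.
have ts : forall i : 'I_4, tilde_n Q n (simple i) = N (Q0 (coroot' (simple i))).
  move=> i; rewrite (tilde_eq Q n n0 hQ hW) ?checkcor ?Q0cor //.
  by case: i => [[|[|[|[|?]]]] Hi] //; vm_compute.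
have q0 : Q0 (coroot' (simple o0)) = 1 by vm_compute.
have q1 : Q0 (coroot' (simple o1)) = 1 by vm_compute.
have q2 : Q0 (coroot' (simple o2)) = 2 by vm_compute.
have q3 : Q0 (coroot' (simple o3)) = 2 by vm_compute.
have na0 : na 0%N = N 1.
  by rewrite /na (@inord_o 0 erefl) (nroot_eq Q n hQ hW) Q0cor q0.
have na3 : na 3%N = N 2.
  by rewrite /na (@inord_o 3 erefl) (nroot_eq Q n hQ hW) Q0cor q3.
have fXE : forall b, fX Q n b = (coroot' b o0)%:~R / (N 1)%:R + (coroot' b o1)%:~R / (N 1)%:R
    + (coroot' b o2)%:~R / (N 2)%:R + (coroot' b o3)%:~R / (N 2)%:R.
  by move=> b; rewrite /fX sum4 !ts q0 q1 q2 q3 !corootE.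
have fYE : forall s, s \in Lr -> fY Q n (vec_of s) = (ht (vec_of s))%:~R / (N (Q0 (coroot' (vec_of s))))%:R.
  move=> s sin; have /andP [hc _] := allP test3 s sin.
  by rewrite /fY sum4 (tilde_eq Q n n0 hQ hW) ?checkcor // Q0cor.
have Np : forall q, (N q)%:R != 0 :> rat by move=> q; rewrite pnatr_eq0 -lt0n Npos.
split.
- rewrite na0 na3 => H.
  have tm : target_mixed (N 2) = [seq x%:~R / (2 * N 2)%:R | x <- LTm].
    rewrite /target_mixed /LTm map_cat -!map_comp; congr (_ ++ _); apply: eq_map => j /=.
      rewrite -[((2 * j)%N%:Z)%:~R]/((2 * j)%N%:R) !natrM.
      by field; rewrite Np.
  rewrite tm; split.
  + have -> : [seq fX Q n b | b <- pos_roots] = [seq x%:~R / (2 * N 2)%:R | x <- map rX pos_roots].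
      rewrite -map_comp; apply: eq_map => b /=; rewrite fXE H /rX !intrD !intrM !natrM.
      by field; rewrite Np.
    exact: mem_map_eqi cX1.
  + have -> : [seq fY Q n b | b <- pos_roots] = [seq x%:~R / (2 * N 2)%:R | x <- map rY pos_roots].
      rewrite prE -!map_comp; apply/eq_in_map => s sin /=; rewrite fYE // /rY.
      have /andP [_ /orP [/eqP -> | /eqP ->]] := allP test3 s sin => /=.
        by rewrite H intrM natrM; field; rewrite Np.
      by rewrite intrM natrM; field; rewrite Np.
    exact: mem_map_eqi cY1.
- move=> H.
  have N12 : N 2 = N 1 by rewrite -na0 -na3; apply: H.
  rewrite na0.
  have tc : target_const (N 1) = [seq x%:~R / (N 1)%:R | x <- LTc].
    by rewrite /target_const /LTc -map_comp.
  rewrite tc; split.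
  + have -> : [seq fX Q n b | b <- pos_roots] = [seq x%:~R / (N 1)%:R | x <- map hX pos_roots].
      rewrite -map_comp; apply: eq_map => b /=; rewrite fXE N12 /hX !intrD.
      by field; rewrite Np.
    exact: mem_map_eqi cX2.
  + have -> : [seq fY Q n b | b <- pos_roots] = [seq x%:~R / (N 1)%:R | x <- map ht pos_roots].
      rewrite prE -!map_comp; apply/eq_in_map => s sin /=; rewrite fYE //.
      by have /andP [_ /orP [/eqP -> | /eqP ->]] := allP test3 s sin; rewrite ?N12.
    exact: mem_map_eqi cY2.
Qed.
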